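(* Let $X$ be a compact metric space and $f:X\to X$ a continuous minimal map. Let $D=\{\dots,x_{-2},x_{-1},x_0,x_1,x_2,\dots\}\subseteq X$ be such that $f(x_n)=x_{n+1}$ for every integer $n$. Suppose that some point of $D$ has more than one $f$-preimage in $X$ (equivalently, an $f$-preimage in $X\setminus D$). Then $(f|_D)^{-1}$ is not continuous, i.e., there is no continuous map $g:D\to D$ with $g(f(x))=x$ and $f(g(x))=x$ for all $x\in D$.
   Context: A continuous selfmap of a compact metric space is minimal if every forward orbit is dense (equivalently, there is no proper nonempty closed invariant subset). *)

(* Defs.v *)
From HB Require Import structures.
From mathcomp Require Import all_boot all_order all_algebra.
From mathcomp Require Import all_classical all_reals all_analysis.
Set Implicit Arguments. Unset Strict Implicit. Unset Printing Implicit Defensive.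
Import Order.TTheory GRing.Theory Num.Theory.
Local Open Scope classical_set_scope.

Definition forward_orbit (X : Type) (f : X -> X) (x : X) : set X :=
  [set iter n f x | n in [set: nat]].

Definition minimal_map (X : topologicalType) (f : X -> X) : Prop :=
  continuous f /\ forall x : X, closure (forward_orbit f x) = [set: X].

(* Main.v *)
Require Import Defs.
From HB Require Import structures.
From mathcomp Require Import all_boot all_order all_algebra.
From mathcomp Require Import all_classical all_reals all_analysis.
Import Order.TTheory GRing.Theory Num.Theory.
Local Open Scope classical_set_scope.
Local Open Scope ring_scope.

Theorem lemma3 (R : realType) (X : pseudoMetricType R)
  (hX : hausdorff_space X) (cX : compact [set: X])
  (f : X -> X) (hf : minimal_map f)
  (x : int -> X) (hx : forall n : int, f (x n) = x (n + 1)) :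
  (exists (n : int) (y1 y2 : X), y1 <> y2 /\ f y1 = x n /\ f y2 = x n) ->
  ~ (exists g : X -> X,
       [/\ {within range x, continuous g},
           (forall p, range x p -> range x (g p)),
           (forall p, range x p -> g (f p) = p) &
           (forall p, range x p -> f (g p) = p)]).
Proof.
move=> [n [y1 [y2 [y12 [fy1 fy2]]]]] [g [gc gD gf fg]].
have [fc dense] := hf.
set D := range x.
have orbD : forward_orbit f (x 0) `<=` D.
  move=> _ [k _ <-]; exists k%:Z => //.
  elim: k => [|k IH] //=; rewrite -IH hx; congr x.
  by rewrite -[k.+1]addn1 PoszD.
have clD : forall y, closure D y.
  by move=> y; apply: (closureS orbD); rewrite dense.
have gc' := (subspace_continuousP D g).1 gc.
have key : forall y, f y = x n -> y = g (x n).
  move=> y fy.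
  have Dxn : D (x n) by exists n.
  have PF : ProperFilter (within D (nbhs y)) := @within_nbhs_proper _ D y (clD y).
  have F1 : within D (nbhs y) --> y by apply: cvg_within.
  have F2 : f @ within D (nbhs y) --> within D (nbhs (x n)).
    move=> W; rewrite /within /= !nbhs_simpl => WN.
    rewrite /fmap /=.
    have := fc y; rewrite /continuous_at fy => /(_ _ WN); rewrite nbhs_simpl /=.
    apply: filterS => z Wz Dz; apply: Wz.
    by case: Dz => k _ <-; rewrite hx; exists (k + 1).
  have F3 : (g \o f) @ within D (nbhs y) --> g (x n).
    by apply: cvg_trans (gc' _ Dxn); apply: cvg_comp F2 _.
  have F4 : id @ within D (nbhs y) --> g (x n).
    apply: cvg_trans F3; apply: fmap_within_eq => z; rewrite inE => Dz.
    by rewrite /= gf.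
  exact: (@cvg_unique _ hX _ PF _ _ F1 F4).
by apply: y12; rewrite (key _ fy1) (key _ fy2).
Qed.
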